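(* Let $R$ be a commutative ring and $I$ an ideal of $R$ with $I\subseteq J(R)$. Then $R$ is locally stable if and only if $R/I$ is locally stable.
   Context: All rings are commutative with identity; $J(R)$ is the Jacobson radical. A ring $S$ has stable range 1 if whenever $aS+bS=S$ there is $y\in S$ with $a+by$ a unit. $S$ is locally stable if whenever $a,b\in S$ with $aS+bS=S$ there is $y\in S$ such that $S/(a+by)S$ has stable range 1. *)

(* Defs.v *)
(* Commutative rings with identity (possibly the zero ring)
   are modelled by [comPzRingType]. *)
From HB Require Import structures.
From mathcomp Require Import all_boot all_algebra.
Set Implicit Arguments. Unset Strict Implicit. Unset Printing Implicit Defensive.
Import GRing.Theory.
Local Open Scope ring_scope.

Definition is_unit (S : comPzRingType) (x : S) : Prop := exists y : S, x * y = 1.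

(* I is an ideal of R (not required to be proper, not required decidable) *)
Definition is_ideal (R : comPzRingType) (I : R -> Prop) : Prop :=
  [/\ I 0, (forall x y, I x -> I y -> I (x + y)) & (forall r x, I x -> I (r * x))].

Definition is_maximal_ideal (R : comPzRingType) (M : R -> Prop) : Prop :=
  [/\ is_ideal M, ~ M 1 &
      forall N : R -> Prop, is_ideal N -> (forall x, M x -> N x) ->
        N 1 \/ (forall x, N x -> M x)].

Definition jacobson (R : comPzRingType) (x : R) : Prop :=
  forall M : R -> Prop, is_maximal_ideal M -> M x.

(* q : R -> Q presents Q as the quotient ring R/K:
   q is a surjective ring morphism whose kernel is exactly K. *)
Definition is_quotient_map (R Q : comPzRingType) (q : {rmorphism R -> Q})
  (K : R -> Prop) : Prop :=
  (forall z : Q, exists x : R, q x = z) /\ (forall x : R, q x = 0 <-> K x).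

Definition comax (S : comPzRingType) (a b : S) : Prop :=
  exists u v : S, a * u + b * v = 1.

Definition stable_range1 (S : comPzRingType) : Prop :=
  forall a b : S, comax a b -> exists y : S, is_unit (a + b * y).

(* The quotient ring S/cS has stable range 1 (stated for every
   presentation of S/cS as a quotient of S). *)
Definition quotient_stable_range1 (S : comPzRingType) (c : S) : Prop :=
  forall (T : comPzRingType) (g : {rmorphism S -> T}),
    is_quotient_map g (fun x => exists s : S, x = c * s) -> stable_range1 T.

Definition locally_stable (S : comPzRingType) : Prop :=
  forall a b : S, comax a b -> exists y : S, quotient_stable_range1 (a + b * y).

(* Main.v *)
Require Import Defs.
From HB Require Import structures.
From mathcomp Require Import all_boot all_algebra.
From mathcomp Require Import boolp classical_sets ring.
Set Implicit Arguments. Unset Strict Implicit. Unset Printing Implicit Defensive.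
Import GRing.Theory.
Local Open Scope ring_scope.
Module QuotPart.
Local Open Scope quotient_scope.
Section Quot.
Variables (S : comPzRingType) (c : S).
Definition qrel (x y : S) : bool := `[< exists s, x - y = c * s >].
Lemma qrel_refl : reflexive qrel.
Proof. by move=> x; apply/asboolP; exists 0; rewrite subrr mulr0. Qed.
Lemma qrel_sym : symmetric qrel.
Proof.
move=> x y; apply/asboolP/asboolP => -[s hs]; exists (- s);
  by rewrite mulrN -hs opprB.
Qed.
Lemma qrel_trans : transitive qrel.
Proof.
move=> y x z /asboolP[s hs] /asboolP[t ht]; apply/asboolP; exists (s + t).
by rewrite mulrDr -hs -ht addrA subrK.
Qed.
Canonical qequiv := EquivRel qrel qrel_refl qrel_sym qrel_trans.
Definition QT := {eq_quot qequiv}.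
HB.instance Definition _ := Choice.on QT.
Definition pq (x : S) : QT := \pi_QT x.
Lemma pqE x y : pq x = pq y <-> exists s, x - y = c * s.
Proof.
split; first by move/eqmodP => /asboolP.
by move=> h; apply/eqmodP/asboolP.
Qed.
Lemma pq_repr (z : QT) : pq (repr z) = z.
Proof. exact: reprK. Qed.
Lemma qcongr x y : (exists s, x - y = c * s) -> pq x = pq y.
Proof. by move/pqE. Qed.

Definition qzero : QT := pq 0.
Definition qopp (a : QT) : QT := pq (- repr a).
Definition qadd (a b : QT) : QT := pq (repr a + repr b).
Definition qone : QT := pq 1.
Definition qmul (a b : QT) : QT := pq (repr a * repr b).

Lemma repr_pq x : exists s, repr (pq x) - x = c * s.
Proof. by apply/pqE; rewrite pq_repr. Qed.

Lemma pq_add x y : pq (x + y) = qadd (pq x) (pq y).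
Proof.
rewrite /qadd; apply: qcongr; have [s hs] := repr_pq x; have [t ht] := repr_pq y.
exists (- (s + t)); rewrite mulrN mulrDr -hs -ht; ring.
Qed.
Lemma pq_opp x : pq (- x) = qopp (pq x).
Proof.
rewrite /qopp; apply: qcongr; have [s hs] := repr_pq x.
exists s; rewrite -hs; ring.
Qed.
Lemma pq_mul x y : pq (x * y) = qmul (pq x) (pq y).
Proof.
rewrite /qmul; apply: qcongr; have [s hs] := repr_pq x; have [t ht] := repr_pq y.
have ex : repr (pq x) = x + c * s by rewrite -hs; ring.
have ey : repr (pq y) = y + c * t by rewrite -ht; ring.
rewrite ex ey.
exists (- (x * t + s * y + s * c * t)); ring.
Qed.
Lemma qind (P : QT -> Prop) : (forall x, P (pq x)) -> forall a, P a.
Proof. by move=> h a; rewrite -(pq_repr a). Qed.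

Lemma qaddA : associative qadd.
Proof.
by elim/qind => x; elim/qind => y; elim/qind => z; rewrite -!pq_add addrA.
Qed.
Lemma qaddC : commutative qadd.
Proof. by elim/qind => x; elim/qind => y; rewrite -!pq_add addrC. Qed.
Lemma qadd0 : left_id qzero qadd.
Proof. by elim/qind => x; rewrite /qzero -!pq_add add0r. Qed.
Lemma qaddN : left_inverse qzero qopp qadd.
Proof. by elim/qind => x; rewrite -pq_opp -!pq_add addNr. Qed.
HB.instance Definition _ := GRing.isZmodule.Build QT qaddA qaddC qadd0 qaddN.
Lemma qmulA : associative qmul.
Proof.
by elim/qind => x; elim/qind => y; elim/qind => z; rewrite -!pq_mul mulrA.
Qed.
Lemma qmulC : commutative qmul.
Proof. by elim/qind => x; elim/qind => y; rewrite -!pq_mul mulrC. Qed.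
Lemma qmul1 : left_id qone qmul.
Proof. by elim/qind => x; rewrite /qone -!pq_mul mul1r. Qed.
Lemma qmulD : left_distributive qmul (+%R : QT -> QT -> QT).
Proof.
elim/qind => x; elim/qind => y; elim/qind => z.
change (qmul (qadd (pq x) (pq y)) (pq z) = qadd (qmul (pq x) (pq z)) (qmul (pq y) (pq z))).
by rewrite -[qadd (pq x) (pq y)]pq_add -!pq_mul -pq_add mulrDl.
Qed.
HB.instance Definition _ := GRing.Zmodule_isComPzRing.Build QT qmulA qmulC qmul1 qmulD.

Lemma pq_zmod : zmod_morphism pq.
Proof. by move=> x y; rewrite pq_add pq_opp. Qed.
HB.instance Definition _ := GRing.isZmodMorphism.Build S QT pq pq_zmod.
Lemma pq_mult : multiplicative pq.
Proof. by split => [x y|]; [rewrite pq_mul|]. Qed.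
HB.instance Definition _ := GRing.isMultiplicative.Build S QT pq pq_mult.

Lemma quot_exists : is_quotient_map (pq : {rmorphism S -> QT}) (fun x => exists s, x = c * s).
Proof.
split; first by move=> z; exists (repr z); exact: pq_repr.
move=> x; split.
  by move=> /(@eq_trans _ _ _ (pq 0)) /(_ erefl) /pqE [s]; rewrite subr0; exists s.
by move=> [s hs]; change (pq x = pq 0); apply/pqE; exists s; rewrite subr0.
Qed.
End Quot.
End QuotPart.
Import QuotPart.
Module ZornPart.
Local Open Scope classical_set_scope.
Lemma jac_unit (R : comPzRingType) (x : R) : jacobson x -> is_unit (1 + x).
Proof.
move=> Jx; apply: contrapT => nU.
pose M0 : set R := fun y => exists s, y = (1 + x) * s.
pose P : set (set R) := fun A => A = set0 \/ [/\ is_ideal A, ~ A 1 & M0 `<=` A].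
have PM0 : P M0.
  right; split.
  - split; first by exists 0; rewrite mulr0.
    + by move=> a b [s ->] [t ->]; exists (s + t); rewrite mulrDr.
    + by move=> r a [s ->]; exists (r * s); rewrite mulrCA.
  - by move=> [s hs]; apply: nU; exists s.
  - by [].
have PnE A y : P A -> A y -> [/\ is_ideal A, ~ A 1 & M0 `<=` A].
  by case=> // -> .
have [A [PA Amax]] : exists A, P A /\ forall B, A `<` B -> ~ P B.
  apply: Zorn_bigcup => F FP Ftot.
  have [[X0 [FX0 [y X0y]]]|none] := pselect (exists X, F X /\ exists y, X y).
  - right; have [[I0 Ia Im] _ M0X0] := PnE _ _ (FP _ FX0) X0y; split.
    + split; first by exists X0.
      * move=> a b [X1 FX1 X1a] [X2 FX2 X2b].
        have [[I01 Ia1 Im1] _ _] := PnE _ _ (FP _ FX1) X1a.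
        have [[I02 Ia2 Im2] _ _] := PnE _ _ (FP _ FX2) X2b.
        have [s12|s21] := Ftot _ _ FX1 FX2.
        -- by exists X2 => //; apply: Ia2 => //; apply: s12.
        -- by exists X1 => //; apply: Ia1 => //; apply: s21.
      * move=> r a [X1 FX1 X1a].
        have [[_ _ Im1] _ _] := PnE _ _ (FP _ FX1) X1a.
        by exists X1 => //; apply: Im1.
    + move=> [X1 FX1 X11].
      by have [_ ] := PnE _ _ (FP _ FX1) X11.
    + by move=> z /M0X0 X0z; exists X0.
  - left; apply/seteqP; split => // z [X FX Xz].
    by exfalso; apply: none; exists X; split => //; exists z.
have AM0 : M0 `<=` A.
  case: PA => [A0|[] //]; exfalso; apply: (Amax M0) => //; rewrite A0; split => //.
  by move=> /(_ 0); apply; exists 0; rewrite mulr0.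
have [Aid nA1] : is_ideal A /\ ~ A 1.
  have h : M0 (1 + x) by exists 1; rewrite mulr1.
  by have [] := PnE _ _ PA (AM0 _ h).
have Amaxi : is_maximal_ideal A.
  split => // N Nid AN.
  have [N1|nN1] := pselect (N 1); first by left.
  right; apply: contrapT => nNA; apply: (Amax N).
    by split.
  by right; split => // z /AM0 /AN.
have Ax := Jx _ Amaxi.
have A1x : A (1 + x) by apply: AM0; exists 1; rewrite mulr1.
case: Aid => _ Ia Im ; apply: nA1.
have -> : (1 : R) = (1 + x) + (-1) * x by ring.
by apply: Ia => //; apply: Im.
Qed.
End ZornPart.
Import ZornPart.
Lemma ker_eq (R T : comPzRingType) (g : {rmorphism R -> T}) K :
  is_quotient_map g K -> forall x y, g x = g y <-> K (x - y).
Proof.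
move=> [_ hk] x y; rewrite -hk rmorphB; split => [->|/eqP]; first by rewrite subrr.
by rewrite subr_eq0 => /eqP.
Qed.

Lemma princ_eq (R T : comPzRingType) (g : {rmorphism R -> T}) (c : R) :
  is_quotient_map g (fun x => exists s, x = c * s) -> forall s, g (c * s) = 0.
Proof. by move=> [_ hk] s; apply/hk; exists s. Qed.

Lemma comax_map (R T : comPzRingType) (g : {rmorphism R -> T}) a b :
  comax a b -> comax (g a) (g b).
Proof. by move=> [u [v h]]; exists (g u), (g v); rewrite -!rmorphM -rmorphD h rmorph1. Qed.

Section Main.
Variables (R : comPzRingType) (I : R -> Prop) (Q : comPzRingType) (q : {rmorphism R -> Q}).
Hypotheses (hI : is_ideal I) (hJ : forall x, I x -> jacobson x) (hq : is_quotient_map q I).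

Lemma unitI i : I i -> exists k, (1 + i) * k = 1.
Proof. by move=> /hJ /jac_unit. Qed.

Lemma backward : locally_stable Q -> locally_stable R.
Proof.
move=> LQ a b ab.
have [y' Hy'] := LQ _ _ (comax_map q ab).
have [y qy] := hq.1 y'; exists y => T g hg.
set c := a + b * y in hg *.
have qc : q a + q b * y' = q c by rewrite /c rmorphD rmorphM qy.
clearbody c.
rewrite qc in Hy'.
have sr2 := Hy' _ _ (quot_exists (q c)).
set p := (pq (q c) : {rmorphism Q -> QT (q c)}) in sr2.
move=> al be [u' [v' h]].
have [a0 ?] := hg.1 al; have [b0 ?] := hg.1 be.
have [u0 ?] := hg.1 u'; have [v0 ?] := hg.1 v'; subst al be u' v'.
have [s hs] : exists s, a0 * u0 + b0 * v0 - 1 = c * s.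
  by apply: (ker_eq hg (a0 * u0 + b0 * v0) 1).1; rewrite rmorphD !rmorphM h rmorph1.
have cm : comax (p (q a0)) (p (q b0)).
  exists (p (q u0)), (p (q v0)).
  have e : p (q (a0 * u0 + b0 * v0)) = p (q 1).
    by apply/pqE; exists (q s); rewrite -rmorphB hs rmorphM.
  by move: e; rewrite !rmorphD !rmorphM !rmorph1.
have [y2 [z2 hz]] := sr2 _ _ cm.
have [y0 ?] : exists y0, p (q y0) = y2.
  have [t <-] := (quot_exists (q c)).1 y2; have [y0 <-] := hq.1 t; by exists y0.
subst y2.
have [z0 hz0] : exists z0, p (q z0) = z2.
  have [t <-] := (quot_exists (q c)).1 z2; have [z0 <-] := hq.1 t; by exists z0.
have hz' : p (q ((a0 + b0 * y0) * z0)) = p (q 1).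
  by rewrite !rmorphM !rmorphD !rmorphM hz0 !rmorph1.
have [s' hs'] := (pqE _ _ _).1 hz'.
have [s2 qs2] := hq.1 s'.
set w := (a0 + b0 * y0) * z0 in hs' *.
have Ii : I (w - 1 - c * s2) by apply: (ker_eq hq (w - 1) (c * s2)).1; rewrite [q (c * s2)]rmorphM qs2 -hs' rmorphB rmorph1.
have [k hk] := unitI Ii.
exists (g y0), (g z0 * g k).
have -> : g a0 + g b0 * g y0 = g (a0 + b0 * y0) by rewrite rmorphD rmorphM.
rewrite mulrA -rmorphM -/w -rmorphM.
have -> : w * k = (1 + (w - 1 - c * s2)) * k + c * (s2 * k) by ring.
by rewrite hk rmorphD (princ_eq hg) addr0 rmorph1.
Qed.

Lemma forward : locally_stable R -> locally_stable Q.
Proof.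
move=> LR a' b' [u' [v' h']].
have [a ?] := hq.1 a'; have [b ?] := hq.1 b'.
have [u ?] := hq.1 u'; have [v ?] := hq.1 v'; subst a' b' u' v'.
have Ii : I (a * u + b * v - 1) by apply: (ker_eq hq (a * u + b * v) 1).1; rewrite rmorphD !rmorphM h' rmorph1.
have [k hk] := unitI Ii.
have ab : comax a b.
  exists (u * k), (v * k); rewrite -hk; ring.
have [y Hy] := LR _ _ ab.
exists (q y) => T g hg.
set c := a + b * y in Hy *.
have qc : q a + q b * q y = q c by rewrite /c rmorphD rmorphM.
clearbody c.
rewrite qc in hg.
have sr1 := Hy _ _ (quot_exists c).
set p := (pq c : {rmorphism R -> QT c}) in sr1.
have surj : forall t : T, exists x, g (q x) = t.
  by move=> t; have [t1 <-] := hg.1 t; have [x <-] := hq.1 t1; exists x.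
move=> al be [u1 [v1 h]].
have [a0 ?] := surj al; have [b0 ?] := surj be.
have [u0 ?] := surj u1; have [v0 ?] := surj v1; subst al be u1 v1.
have [t' ht'] : exists t', q (a0 * u0 + b0 * v0 - 1) = q c * t'.
  apply/hg.2; by rewrite !rmorphB !rmorphD !rmorphM h !rmorph1 subrr.
have [t qt] := hq.1 t'.
have Ij : I (a0 * u0 + b0 * v0 - 1 - c * t).
  by apply: (ker_eq hq (a0 * u0 + b0 * v0 - 1) (c * t)).1; rewrite [q (c * t)]rmorphM qt ht'.
have [k0 hk0] := unitI Ij.
have cm : comax (p a0) (p b0).
  exists (p (u0 * k0)), (p (v0 * k0)).
  have e : p (a0 * (u0 * k0) + b0 * (v0 * k0)) = p 1.
    apply/pqE; exists (t * k0).
    have -> : a0 * (u0 * k0) + b0 * (v0 * k0) = (1 + (a0 * u0 + b0 * v0 - 1 - c * t)) * k0 + c * t * k0 by ring.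
    rewrite hk0; ring.
  by move: e; rewrite !rmorphD !rmorphM !rmorph1.
have [y2 [z2 hz]] := sr1 _ _ cm.
have [y0 ?] := (quot_exists c).1 y2; have [z0 hz0] := (quot_exists c).1 z2; subst y2.
have hz' : p ((a0 + b0 * y0) * z0) = p 1.
  by rewrite !rmorphM !rmorphD !rmorphM hz0 !rmorph1.
have [s hs] := (pqE _ _ _).1 hz'.
exists (g (q y0)), (g (q z0)).
rewrite -!rmorphM -!rmorphD -!rmorphM.
have -> : (a0 + b0 * y0) * z0 = 1 + c * s by rewrite -hs; ring.
by rewrite !rmorphD rmorph1 rmorphM (princ_eq hg) addr0 rmorph1.
Qed.
End Main.

Theorem proposition2p5 (R : comPzRingType) (I : R -> Prop)
  (Q : comPzRingType) (q : {rmorphism R -> Q}) :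
  is_ideal I -> (forall x, I x -> jacobson x) -> is_quotient_map q I ->
  (locally_stable R <-> locally_stable Q).
Proof. by move=> hI hJ hq; split; [apply: forward|apply: backward]; eauto. Qed.
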